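(* Let $(\mathcal A,\rho)$ be a pseudo-quasimetric space. Define $x\sim y$ iff $\rho(x,y)=0$, let $\tilde{\mathcal A}=\mathcal A/\sim$ with classes $[x]$, and set $\tilde\rho([x],[y])=\inf\{\rho(a,b):a\in[x],b\in[y]\}$. Then $(\tilde{\mathcal A},\tilde\rho)$ is a pseudo-metric space.
   Context: A pseudo-quasimetric space is a pair $(\mathcal A,\rho)$ with $\rho:\mathcal A\times\mathcal A\to\mathbb R_{\ge0}$ such that for all $x,y,z$: $\rho(x,x)=0$; $\rho(x,y)=\rho(y,x)$; and $\rho(x,z)\le C(\rho(x,y)+\rho(y,z))$ for a constant $C\ge1$ independent of $x,y,z$. It is a pseudo-metric space if in addition $x\ne y$ implies $\rho(x,y)>0$. (The relation $\sim$ is an equivalence relation.) *)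

(* Defs.v *)
From HB Require Import structures.
From mathcomp Require Import all_boot all_order all_algebra.
From mathcomp Require Import boolp classical_sets reals.
Set Implicit Arguments. Unset Strict Implicit. Unset Printing Implicit Defensive.
Import Order.TTheory GRing.Theory Num.Theory.
Local Open Scope ring_scope.
Local Open Scope classical_set_scope.

Section Defs.
Context (R : realType).

Definition pseudo_quasimetric (A : Type) (rho : A -> A -> R) : Prop :=
  (forall x y, 0 <= rho x y) /\
  (forall x, rho x x = 0) /\
  (forall x y, rho x y = rho y x) /\
  (exists C : R, 1 <= C /\
     forall x y z, rho x z <= C * (rho x y + rho y z)).

(* pseudo-metric (in the paper's sense): pseudo-quasimetric + separation. *)
Definition pseudo_metric (A : Type) (rho : A -> A -> R) : Prop :=
  pseudo_quasimetric rho /\ (forall x y, x <> y -> 0 < rho x y).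

Definition qrel (A : Type) (rho : A -> A -> R) (x y : A) : Prop := rho x y = 0.

Definition qclass (A : Type) (rho : A -> A -> R) (x : A) : set A :=
  [set y | qrel rho x y].

Definition quot (A : Type) (rho : A -> A -> R) : Type :=
  {S : set A | exists x, S = qclass rho x}.

Definition qrho (A : Type) (rho : A -> A -> R) (S T : quot rho) : R :=
  inf [set r : R | exists a b, proj1_sig S a /\ proj1_sig T b /\ r = rho a b].

End Defs.

(* Main.v *)
Require Import Defs.
From HB Require Import structures.
From mathcomp Require Import all_boot all_order all_algebra.
From mathcomp Require Import boolp classical_sets reals.
From mathcomp Require Import lra.
Set Implicit Arguments. Unset Strict Implicit.
Import Order.TTheory GRing.Theory Num.Theory.
Local Open Scope ring_scope.
Local Open Scope classical_set_scope.

Section H.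
Variables (R : realType) (A : Type) (rho : A -> A -> R).
Hypothesis hq : pseudo_quasimetric rho.

Let Eset (S T : quot rho) := [set r : R | exists a b, proj1_sig S a /\ proj1_sig T b /\ r = rho a b].

Lemma memS (S : quot rho) : exists x, proj1_sig S x.
Proof.
case: S => S [x Hx] /=; exists x; rewrite Hx /qclass /qrel /=.
by case: hq => _ [-> _].
Qed.

Lemma Eset_ne S T : Eset S T !=set0.
Proof.
have [a Ha] := memS S; have [b Hb] := memS T.
by exists (rho a b), a, b.
Qed.

Lemma Eset_lb S T : lbound (Eset S T) 0.
Proof. by move=> r [a [b [_ [_ ->]]]]; case: hq. Qed.

Lemma qrho_le S T a b : proj1_sig S a -> proj1_sig T b -> @qrho R A rho S T <= rho a b.
Proof.
move=> Ha Hb; apply: (ge_inf (E := Eset S T)); first by exists 0; exact: Eset_lb.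
by exists a, b.
Qed.

Lemma qrho_ge S T x : lbound (Eset S T) x -> x <= @qrho R A rho S T.
Proof. by move=> H; apply: lb_le_inf => //; exact: Eset_ne. Qed.

Lemma qrho_adh S T e : 0 < e -> exists a b, proj1_sig S a /\ proj1_sig T b /\ rho a b < @qrho R A rho S T + e.
Proof.
move=> e0; have [r [a [b [Ha [Hb ->]]]] Hr] := inf_adherent e0 (conj (Eset_ne S T) (ex_intro _ 0 (@Eset_lb S T))).
by exists a, b.
Qed.
End H.

Theorem lemma2p1 (R : realType) (A : Type) (rho : A -> A -> R) :
  pseudo_quasimetric rho -> pseudo_metric (@qrho R A rho).
Proof.
move=> hq; have [h0 [hxx [hsym [C [C1 hC]]]]] := hq.
have C0 : 0 <= C by apply: le_trans C1.
have tri2 : forall a b b' c, rho b b' = 0 -> rho a c <= C ^+ 2 * (rho a b + rho b' c).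
  move=> a b b' c hbb.
  apply: (le_trans (hC a b c)).
  have hbc : rho b c <= C * rho b' c.
    by apply: (le_trans (hC b b' c)); rewrite hbb add0r.
  have := h0 a b; have := h0 b' c => h1 h2.
  have k1 : C * rho a b <= C ^+ 2 * rho a b.
    by rewrite expr2 -mulrA ler_peMl // mulr_ge0.
  have k2 : C * rho b c <= C ^+ 2 * rho b' c.
    by rewrite expr2 -mulrA ler_wpM2l.
  rewrite mulrDr [X in _ <= X]mulrDr; exact: lerD.
split; first split.
- move=> S T; apply: qrho_ge => //; exact: Eset_lb.
split.
- move=> S; apply/eqP; rewrite eq_le; apply/andP; split.
    have [a Ha] := memS hq S; by rewrite -(hxx a); apply: qrho_le.
  apply: qrho_ge => //; exact: Eset_lb.
split.
- move=> S T; rewrite /qrho; congr inf; rewrite predeqE => r; split.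
    by move=> [a [b [Ha [Hb ->]]]]; exists b, a; rewrite hsym.
  by move=> [a [b [Ha [Hb ->]]]]; exists b, a; rewrite hsym.
- exists (C ^+ 2); split; first by rewrite -[1](expr1n _ 2); rewrite lerXn2r // ?nnegrE.
  move=> S T U; apply/ler_addgt0Pr => e e0.
  have C2 : 0 <= C ^+ 2 by apply: exprn_ge0.
  have P0 : 0 < 2 * C ^+ 2 + 1 by rewrite ltr_wpDl // mulr_ge0.
  have e1 : 0 < e / (2 * C ^+ 2 + 1) by apply: divr_gt0.
  have [a [b [Ha [Hb Hab]]]] := qrho_adh hq S T e1.
  have [b' [c [Hb' [Hc Hbc]]]] := qrho_adh hq T U e1.
  have hbb : rho b b' = 0.
    move: Hb Hb'; case: (T) => T' [x Hx] /=; rewrite Hx /qclass /qrel /= => hxb hxb'.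
    apply/eqP; rewrite eq_le h0 andbT; apply: le_trans (hC b x b') _.
    by rewrite -hsym hxb hxb' addr0 mulr0.
  apply: (le_trans (qrho_le hq Ha Hc)); apply: (le_trans (tri2 _ _ _ _ hbb)).
  set d := e / (2 * C ^+ 2 + 1).
  have hd : d * (2 * C ^+ 2 + 1) = e by rewrite /d mulfVK // lt0r_neq0.
  have h1 := ltW Hab; have h2 := ltW Hbc.
  have k1 : C ^+ 2 * rho a b <= C ^+ 2 * (qrho S T + d) by rewrite ler_wpM2l.
  have k2 : C ^+ 2 * rho b' c <= C ^+ 2 * (qrho T U + d) by rewrite ler_wpM2l.
  have dp : 0 < d by [].
  rewrite -hd; nra.
- move=> S T neq.
  case: (S) neq => S' [x HS]; case: (T) => T' [y HT] neq.
  have rxy : rho x y != 0.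
    apply/eqP => rxy; apply: neq.
    have HST : S' = T'.
      rewrite HS HT /qclass /qrel predeqE => z; split => hz.
        apply/eqP; rewrite eq_le h0 andbT; apply: le_trans (hC y x z) _.
        by rewrite hsym rxy hz addr0 mulr0.
      apply/eqP; rewrite eq_le h0 andbT; apply: le_trans (hC x y z) _.
      by rewrite rxy hz addr0 mulr0.
    by apply: eq_sig_hprop => [? ? ?|]; [exact: Prop_irrelevance|exact: HST].
  have C2 : 0 < C ^+ 2 by apply: exprn_gt0; apply: lt_le_trans C1.
  apply: (@lt_le_trans _ _ (rho x y / C ^+ 2)).
    by apply: divr_gt0 => //; rewrite lt0r rxy h0.
  apply: qrho_ge => // r [a [b [/= Ha [/= Hb ->]]]].
  rewrite ler_pdivrMr // mulrC.
  move: Ha Hb; rewrite HS HT /qclass /qrel /= => Ha Hb.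
  have k1 := hC x a y; rewrite Ha add0r in k1.
  have k2 := hC a b y; rewrite (hsym b y) Hb addr0 in k2.
  apply: (le_trans k1); rewrite expr2 -mulrA; exact: ler_wpM2l.
Qed.
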